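(* Let $\{p_{\alpha}:\alpha<2^{\mathfrak{c}}\}\subseteq\omega^*$ be a family with the following property (P): for every countably infinite $D\subseteq 2^{\mathfrak{c}}$ and every family $\{f_\alpha:\alpha\in D\}$ of one-to-one sequences $f_\alpha:\omega\to[2^{\mathfrak{c}}]^{<\omega}$ each with linearly independent range, there are pairwise disjoint sets $U_\alpha\subseteq\omega$ ($\alpha\in D$) with $U_\alpha\in p_\alpha$ for all $\alpha\in D$ and $\{f_\alpha(n):\alpha\in D,\ n\in U_\alpha\}$ linearly independent. Let $I\subseteq 2^{\mathfrak{c}}$ and let $\{f_{\alpha}:\alpha\in I\}$ be a family of one-to-one sequences $f_\alpha:\omega\to[2^{\mathfrak{c}}]^{<\omega}$, each with linearly independent range. Let $D\subseteq 2^{\mathfrak{c}}$ be countably infinite such that $\bigcup_{n\in\omega}f_{\alpha}(n)\subseteq D$ for every $\alpha\in D\cap I$. Let $D_0\subseteq D$ be finite and $F:D_0\to\{0,1\}$ any function. Then there exists a group homomorphism $\phi:[D]^{<\omega}\to\{0,1\}$ such that $\phi(\{\alpha\})=p_{\alpha}\text{-}\lim_{n\in\omega}\phi(f_{\alpha}(n))$ for every $\alpha\in D\cap I$, and $\phi(\{d\})=F(d)$ for every $d\in D_0$.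
   Context: $\mathfrak{c}=2^{\aleph_0}$, and $2^{\mathfrak{c}}$ is regarded as the set of ordinals below it. $\omega^*$ is the set of free ultrafilters on $\omega$. For a set $X$, $[X]^{<\omega}$ is the set of finite subsets of $X$, a Boolean group (vector space over the field $\{0,1\}=\mathbb{Z}/2$) under symmetric difference with zero $\emptyset$; linear independence refers to this structure, and $\{0,1\}$ is the group $\mathbb{Z}/2$. For $p\in\omega^*$ and a sequence $(x_n)$ in $\{0,1\}$ (discrete), $p\text{-}\lim_{n}x_n$ is the unique $i\in\{0,1\}$ with $\{n:x_n=i\}\in p$. (A family with property (P) exists in ZFC.) *)

(* Defs.v *)
From mathcomp Require Import all_boot.
From mathcomp Require Import boolp classical_sets cardinality.
From Stdlib Require Import List.
Set Implicit Arguments. Unset Strict Implicit. Unset Printing Implicit Defensive.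
Local Open Scope classical_set_scope.

(* The index set 2^c (ordinals below 2^c).  Only its cardinality matters in the
   statement, so we use the canonical set of size 2^c: the power set of the
   power set of omega. *)
Definition twoc : Type := set (set nat).

Definition free_ultrafilter (p : set (set nat)) : Prop :=
  [/\ ~ p set0, p setT,
      (forall A B, p A -> p B -> p (A `&` B)),
      (forall A B, A `<=` B -> p A -> p B) &
      (forall A, p A \/ p (~` A))] /\
  (forall A, finite_set A -> ~ p A).

(* Group operation on [X]^{<omega}: symmetric difference. *)
Definition symdiff {T} (A B : set T) : set T := (A `\` B) `|` (B `\` A).

Definition sumsets {T} (s : list (set T)) : set T := fold_right symdiff set0 s.

(* Linear independence over Z/2 of a family S of finite subsets:
   no nonempty finite subfamily of distinct members sums to zero (= emptyset). *)
Definition lin_indep {T} (S : set (set T)) : Prop :=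
  forall s : list (set T), NoDup s -> s <> nil ->
    (forall A, In A s -> S A) -> sumsets s <> set0.

Definition good_seq {T} (f : nat -> set T) : Prop :=
  [/\ (forall n, finite_set (f n)), injective f & lin_indep (range f)].

(* p-lim_n x_n = i  for x : nat -> bool (bool = Z/2, discrete) *)
Definition is_plim (p : set (set nat)) (x : nat -> bool) (i : bool) : Prop :=
  p [set n | x n = i].

Definition countably_infinite {T} (D : set T) : Prop :=
  countable D /\ infinite_set D.

Definition propP (p : twoc -> set (set nat)) : Prop :=
  forall (D : set twoc) (f : twoc -> nat -> set twoc),
    countably_infinite D ->
    (forall a, D a -> good_seq (f a)) ->
    exists U : twoc -> set nat,
      [/\ (forall a, D a -> p a (U a)),
          (forall a b, D a -> D b -> a <> b -> U a `&` U b = set0) &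
          lin_indep [set A | exists a n, [/\ D a, U a n & A = f a n]]].

(* Group homomorphisms [D]^{<omega} -> Z/2 (bool with xor), given as
   functions on finite subsets of D respecting the group law. *)
Definition hom_fin {T} (D : set T) (phi : set T -> bool) : Prop :=
  forall A B, finite_set A -> finite_set B -> A `<=` D -> B `<=` D ->
    phi (symdiff A B) = addb (phi A) (phi B).

(* Main.v *)
Require Import Defs.
From mathcomp Require Import all_boot.
From mathcomp Require Import boolp classical_sets cardinality.
From mathcomp Require Import zify.
Set Implicit Arguments. Unset Strict Implicit. Unset Printing Implicit Defensive.
Local Open Scope classical_set_scope.

Section SymDiff.
Variable T : Type.
Implicit Types A B C : set T.

Lemma symdiffE A B x : symdiff A B x <-> (A x <-> ~ B x).
Proof. rewrite /symdiff /setU /setD /=; move: (EM (A x)) (EM (B x)); tauto. Qed.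

Lemma symdiffC A B : symdiff A B = symdiff B A.
Proof. apply/seteqP; split=> x; rewrite !symdiffE; move: (EM (A x)) (EM (B x)); tauto. Qed.

Lemma symdiffA A B C : symdiff A (symdiff B C) = symdiff (symdiff A B) C.
Proof. apply/seteqP; split=> x; rewrite !symdiffE; move: (EM (A x)) (EM (B x)) (EM (C x)); tauto. Qed.

Lemma symdiff0 A : symdiff A set0 = A.
Proof. apply/seteqP; split=> x; rewrite !symdiffE /=; move: (EM (A x)); tauto. Qed.

Lemma symdiff0l A : symdiff set0 A = A.
Proof. by rewrite symdiffC symdiff0. Qed.

Lemma symdiffxx A : symdiff A A = set0.
Proof. apply/seteqP; split=> x; rewrite !symdiffE /=; move: (EM (A x)); tauto. Qed.

Lemma symdiffK A B : symdiff A (symdiff A B) = B.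
Proof. by rewrite symdiffA symdiffxx symdiff0l. Qed.

Lemma symdiffAC A B C : symdiff A (symdiff B C) = symdiff B (symdiff A C).
Proof. by rewrite !symdiffA (symdiffC A). Qed.

Lemma symdiff_eq0 A B : symdiff A B = set0 -> A = B.
Proof. by move=> h; rewrite -(symdiffK A B) h symdiff0. Qed.

Lemma sumsets_cons A (s : seq (set T)) : sumsets (A :: s) = symdiff A (sumsets s).
Proof. by []. Qed.

Lemma sumsets_nil : sumsets (@nil (set T)) = set0.
Proof. by []. Qed.

Lemma sumsets_cat (s1 s2 : seq (set T)) : sumsets (s1 ++ s2) = symdiff (sumsets s1) (sumsets s2).
Proof. elim: s1 => [|a s IH]; first by rewrite symdiff0l. by rewrite cat_cons !sumsets_cons IH symdiffA. Qed.

Lemma sumsets_mem (s : seq (set T)) x : sumsets s x -> exists2 A, A \in s & A x.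
Proof.
elim: s => [//|a s IH]; rewrite sumsets_cons symdiffE.
case: (EM (a x)) => ax h; first by exists a; rewrite ?mem_head.
have /IH [A As Ax] : sumsets s x by move: (EM (sumsets s x)); tauto.
by exists A; rewrite // in_cons As orbT.
Qed.

Lemma sumsets_rem A (s : seq (set T)) : A \in s -> sumsets s = symdiff A (sumsets (rem A s)).
Proof.
elim: s => [//|a s IH]; rewrite in_cons => /orP [/eqP ->|As].
  by rewrite /= eqxx.
have [->|ne] := eqVneq A a; first by rewrite /= eqxx.
rewrite /= eq_sym (negbTE ne) /=. rewrite -!/(sumsets _) (IH As) -/(sumsets _) symdiffAC //.
Qed.

End SymDiff.

Section Red.
Variable T : eqType.
Definition red (s : seq T) : seq T :=
  foldr (fun a r => if a \in r then rem a r else a :: r) [::] s.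

Lemma red_cons a s : red (a :: s) = if a \in red s then rem a (red s) else a :: red s.
Proof. by []. Qed.

Lemma red_uniq s : uniq (red s).
Proof.
elim: s => [//|a s IH]; rewrite red_cons; case: ifP => h.
  exact: rem_uniq.
by rewrite /= h IH.
Qed.

Lemma red_sub s : {subset red s <= s}.
Proof.
elim: s => [//|a s IH] x; rewrite red_cons; case: ifP => h.
  by move=> /mem_rem /IH; rewrite in_cons => ->; rewrite orbT.
by rewrite !in_cons => /orP [->//|/IH ->]; rewrite orbT.
Qed.

Lemma mem_red s x : (x \in red s) = odd (count_mem x s).
Proof.
elim: s x => [//|a s IH] x; rewrite red_cons /=; case: ifP => h.
  rewrite (mem_rem_uniq _ (red_uniq s)) inE /=.
  have [->|ne] := eqVneq x a; first by rewrite /= -IH h.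
  by rewrite /= IH.
rewrite in_cons; have [->|ne] := eqVneq x a; first by rewrite /= -IH h.
by rewrite /= IH.
Qed.

Variable R : Type.
Variable op : R -> R -> R.
Hypothesis opAC : forall x y z, op x (op y z) = op y (op x z).
Hypothesis opK : forall x y, op x (op x y) = y.
Variable f : T -> R.
Variable z : R.

Lemma foldr_rem a s : a \in s ->
  foldr (fun b acc => op (f b) acc) z s = op (f a) (foldr (fun b acc => op (f b) acc) z (rem a s)).
Proof.
elim: s => [//|b s IH]; rewrite in_cons => /orP [/eqP ->|As].
  by rewrite /= eqxx.
have [->|ne] := eqVneq a b; first by rewrite /= eqxx.
by rewrite /= eq_sym (negbTE ne) /= (IH As) opAC.
Qed.

Lemma foldr_red s :
  foldr (fun b acc => op (f b) acc) z (red s) = foldr (fun b acc => op (f b) acc) z s.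
Proof.
elim: s => [//|a s IH]; rewrite red_cons; case: ifP => h /=.
  by rewrite -IH (foldr_rem h) opK.
by rewrite IH.
Qed.
End Red.

Lemma sumsets_foldr T (s : seq (set T)) : sumsets s = foldr (fun b acc => symdiff b acc) set0 s.
Proof. by elim: s => //= a s ->. Qed.

Lemma sumsets_red T (s : seq (set T)) : sumsets (red s) = sumsets s.
Proof.
rewrite !sumsets_foldr (foldr_red (op := @symdiff T) _ _ id) //.
  exact: symdiffAC.
exact: symdiffK.
Qed.

Definition xorl (l : seq bool) := foldr addb false l.

Lemma xorl_red (T : eqType) (f : T -> bool) (s : seq T) : xorl (map f (red s)) = xorl (map f s).
Proof.
have E u : xorl (map f u) = foldr (fun b acc => addb (f b) acc) false u by elim: u => //= a u ->.
rewrite !E (foldr_red (op := addb)) //.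
  by move=> x y w; rewrite addbCA.
by move=> x y; rewrite addbA addbb.
Qed.

Lemma In_mem (T : eqType) (x : T) s : List.In x s <-> x \in s.
Proof.
elim: s => [//|a s IH] /=; rewrite in_cons IH; split.
  by case=> [->|->]; rewrite ?eqxx ?orbT.
by case/orP=> [/eqP->|->]; [left|right].
Qed.

Lemma NoDup_uniq (T : eqType) (s : seq T) : List.NoDup s <-> uniq s.
Proof.
elim: s => [|a s IH]; first by split=> // _; constructor.
split.
  move=> h; have h1 : ~ List.In a s by inversion h.
  have h2 : List.NoDup s by inversion h.
  by rewrite /= (proj1 IH h2) andbT; apply/negP=> /In_mem.
by case/andP=> h1 h2; constructor; [move=> /In_mem; apply/negP | apply/IH].
Qed.

Lemma xorl_cons x (a : seq bool) : xorl (x :: a) = addb x (xorl a).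
Proof. by []. Qed.
Lemma xorl_cat (a b : seq bool) : xorl (a ++ b) = addb (xorl a) (xorl b).
Proof. by elim: a => [|x a IH] //; rewrite cat_cons !xorl_cons IH addbA. Qed.

Section Cons.
Variable T : Type.
Definition Rel := set T * bool -> Prop.
Definition consR (R : Rel) := forall l : seq (set T * bool),
  (forall z, List.In z l -> R z) -> sumsets (map fst l) = set0 -> xorl (map snd l) = false.

Lemma remove_new (R : Rel) v b l : (forall z, List.In z l -> R z \/ z = (v,b)) ->
  exists l' k, [/\ (forall z, List.In z l' -> R z),
    sumsets (map fst l) = symdiff (sumsets (map fst l')) (if k then v else set0) &
    xorl (map snd l) = addb (xorl (map snd l')) (k && b)].
Proof.
elim: l => [|z l IH] H.
  by exists [::], false; split => //=; rewrite symdiff0.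
have [l' [k [H1 H2 H3]]] := IH (fun w hw => H w (or_intror hw)).
case: (H z (or_introl erefl)) => [Rz|->].
  exists (z :: l'), k; split.
  - by move=> w /= [<-|/H1].
  - by rewrite /= -/(sumsets _) H2 symdiffA.
  - by rewrite /= H3 addbA.
exists l', (~~ k); split => //.
  rewrite /= -/(sumsets _) H2; case: k {H2 H3} => /=.
    by rewrite symdiffC -symdiffA symdiffxx symdiff0.
  by rewrite symdiff0 symdiffC.
by rewrite /= H3; case: k {H2 H3}; case: (xorl _); case: (b).
Qed.

Lemma cons_step (R : Rel) : consR R -> forall v, exists b, consR (fun z => R z \/ z = (v,b)).
Proof.
move=> hR v; case: (EM (consR (fun z => R z \/ z = (v,true)))) => H1; first by exists true.
exists false => l Hl Hs; case E: (xorl _) => //; exfalso; apply: H1 => l1 Hl1 Hs1.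
case E1: (xorl _) => //; exfalso.
have [l' [k [H1 H2 H3]]] := remove_new Hl.
have [l1' [k1 [H1' H2' H3']]] := remove_new Hl1.
rewrite andbF addbF E in H3.
rewrite andbT E1 in H3'.
case: k H2 => H2; last first.
  by move: (hR l' H1); rewrite symdiff0 in H2; rewrite -H2 Hs -H3 => /(_ erefl).
case: k1 H2' H3' => H2' H3'; last first.
  by move: (hR l1' H1'); rewrite symdiff0 in H2'; rewrite -H2' Hs1 => /(_ erefl); rewrite addbF in H3'; rewrite -H3'.
have e1 := symdiff_eq0 (esym (etrans (esym Hs) H2)).
have e2 := symdiff_eq0 (esym (etrans (esym Hs1) H2')).
have : xorl (map snd (l' ++ l1')) = false.
  apply: hR; first by move=> w /(List.in_app_or _ _ _) [/H1|/H1'].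
  by rewrite map_cat sumsets_cat e1 e2 symdiffxx.
by rewrite map_cat xorl_cat -H3; move: H3'; case: (xorl (map snd l1')).
Qed.

Lemma cons_phi (R : Rel) (hR : consR R) l A :
  (forall z, List.In z l -> R z) -> sumsets (map fst l) = A ->
  `[< exists l, (forall z, List.In z l -> R z) /\ sumsets (map fst l) = A /\ xorl (map snd l) = true >]
  = xorl (map snd l).
Proof.
move=> Hl HA; case E: (xorl _).
  by apply/asboolP; exists l.
apply/negbTE/asboolP => -[l2 [Hl2 [HA2 E2]]].
have : xorl (map snd (l ++ l2)) = false.
  apply: hR; first by move=> w /(List.in_app_or _ _ _) [/Hl|/Hl2].
  by rewrite map_cat sumsets_cat HA HA2 symdiffxx.
by rewrite map_cat xorl_cat E E2.
Qed.

Section Chain.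
Variable R0 : Rel.
Hypothesis h0 : consR R0.
Variable x : nat -> T.

Definition ext_step (R : Rel) (hR : consR R) (v : set T) :
  {b : bool | consR (fun z => R z \/ z = (v,b))} := cid (cons_step hR v).

Fixpoint chain (k : nat) : {R : Rel | consR R} :=
  match k with
  | 0 => exist _ R0 h0
  | S k => let c := chain k in
      exist _ (fun z => sval c z \/ z = ([set x k], sval (ext_step (svalP c) [set x k])))
        (svalP (ext_step (svalP c) [set x k]))
  end.

Definition Rinf : Rel := fun z => exists k, sval (chain k) z.

Lemma chain_mono i j z : (i <= j)%N -> sval (chain i) z -> sval (chain j) z.
Proof.
elim: j => [|j IH]; first by rewrite leqn0 => /eqP ->.
rewrite leq_eqVlt => /orP [/eqP -> //|]; rewrite ltnS => /IH h /h hz /=; by left.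
Qed.

Lemma Rinf_R0 z : R0 z -> Rinf z.
Proof. by move=> h; exists 0. Qed.

Lemma Rinf_single k : exists b, Rinf ([set x k], b).
Proof. by exists (sval (ext_step (svalP (chain k)) [set x k])); exists k.+1; right. Qed.

Lemma Rinf_cons : consR Rinf.
Proof.
move=> l Hl; have [K HK] : exists K, forall z, List.In z l -> sval (chain K) z.
  elim: l Hl => [|z l IH] Hl; first by exists 0.
  have [K HK] := IH (fun w hw => Hl w (or_intror hw)).
  have [k Hk] := Hl z (or_introl erefl).
  exists (maxn K k) => w /= [<-|/HK hw].
    exact: (chain_mono (leq_maxr K k) Hk).
  exact: (chain_mono (leq_maxl K k) hw).
exact: (svalP (chain K) l HK).
Qed.
End Chain.
End Cons.

Section Span.
Variable T : Type.
Definition Sp (Y : set (set T)) (v : set T) :=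
  exists s : seq (set T), (forall A, List.In A s -> Y A) /\ v = sumsets s.

Lemma Sp0 Y : Sp Y set0.
Proof. by exists [::]. Qed.

Lemma Sp1 (Y : set (set T)) A : Y A -> Sp Y A.
Proof. by move=> h; exists [:: A]; split; [move=> B /= [<-|]|rewrite /= symdiff0]. Qed.

Lemma SpD Y a b : Sp Y a -> Sp Y b -> Sp Y (symdiff a b).
Proof.
move=> [s [Hs ->]] [t [Ht ->]]; exists (s ++ t); split; last by rewrite sumsets_cat.
by move=> A /(List.in_app_or _ _ _) [/Hs|/Ht].
Qed.

Lemma Sp_mono (Y Y' : set (set T)) v : Y `<=` Y' -> Sp Y v -> Sp Y' v.
Proof. by move=> sub [s [Hs ->]]; exists s; split => // A /Hs /sub. Qed.

Lemma Sp_sum Y (s : seq (set T)) : (forall A, List.In A s -> Sp Y A) -> Sp Y (sumsets s).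
Proof.
elim: s => [|a s IH] H; first exact: Sp0.
by apply: SpD; [apply: H; left|apply: IH => A hA; apply: H; right].
Qed.

Lemma Sp_split Y x v : Sp (Y `|` [set x]) v -> Sp Y v \/ Sp Y (symdiff v x).
Proof.
move=> [s [Hs ->]]; elim: s Hs => [|a s IH] Hs; first by left; exact: Sp0.
rewrite sumsets_cons.
have [h|h] := IH (fun A hA => Hs A (or_intror hA)); case: (Hs a (or_introl erefl)) => [Ya|ax].
- by left; apply: SpD => //; exact: Sp1.
- by right; rewrite ax symdiffC symdiffK.
- by right; rewrite -symdiffA; apply: SpD => //; exact: Sp1.
- by left; rewrite ax symdiffC.
Qed.

Definition indep_mod (Y : set (set T)) (e : nat -> set T) (N : set nat) :=
  forall S : seq nat, uniq S -> S <> [::] -> (forall n, n \in S -> N n) ->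
    ~ Sp Y (sumsets (map e S)).

Lemma indep_mod_mono (Y Y' : set (set T)) e (N N' : set nat) :
  Y' `<=` Y -> N' `<=` N -> indep_mod Y e N -> indep_mod Y' e N'.
Proof.
move=> sY sN h S u ne HN /(Sp_mono sY); apply: h => // n /HN; exact: sN.
Qed.

Lemma shrink1 Y e N x : indep_mod Y e N ->
  exists K : seq nat, indep_mod (Y `|` [set x]) e (fun n => N n /\ n \notin K).
Proof.
move=> hI.
case: (EM (exists S0, [/\ uniq S0, S0 <> [::], (forall n, n \in S0 -> N n) &
   Sp (Y `|` [set x]) (sumsets (map e S0))])) => [[S0 [u0 ne0 N0 Sp0']]|H].
  exists S0 => S uS neS NS SpS.
  have NS' : forall n, n \in S -> N n by move=> n /NS [].
  case: (Sp_split SpS) => [h|h]; first exact: (hI S uS neS NS' h).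
  case: (Sp_split Sp0') => [h0|h0]; first exact: (hI S0 u0 ne0 N0 h0).
  apply: (hI (S ++ S0)).
  - rewrite cat_uniq uS u0 andbT /=; apply/hasPn => n nS0; apply/negP => nS.
    by have [_ /negP] := NS n nS.
  - by move: neS; case: (S).
  - by move=> n; rewrite mem_cat => /orP [/NS' | /N0].
  - rewrite map_cat sumsets_cat.
    have -> : symdiff (sumsets (map e S)) (sumsets (map e S0)) =
              symdiff (symdiff (sumsets (map e S)) x) (symdiff (sumsets (map e S0)) x).
      by rewrite (symdiffC (sumsets (map e S0))) -symdiffA symdiffK.
    exact: SpD.
exists [::] => S uS neS NS SpS; apply: H; exists S; split => //.
by move=> n /NS [].
Qed.

Lemma shrink (X : seq (set T)) : forall Y e N, indep_mod Y e N ->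
  exists K : seq nat, indep_mod (Y `|` [set A | List.In A X]) e (fun n => N n /\ n \notin K).
Proof.
elim: X => [|x X IH] Y e N hI.
  exists [::]; apply: (indep_mod_mono _ _ hI) => [A [//|[]]|n []//].
have [K1 h1] := shrink1 x hI.
have [K2 h2] := IH _ _ _ h1.
exists (K1 ++ K2); apply: (indep_mod_mono _ _ h2).
  by move=> A [YA|/= [->|XA]]; [left; left|left; right|right].
by move=> n [Nn]; rewrite mem_cat negb_or => /andP [n1 n2].
Qed.
End Span.

Lemma sset1_inj T (a b : T) : [set a] = [set b] -> a = b.
Proof. by move=> h; have : [set a] a by []; rewrite h. Qed.

Lemma sum_singles T (s : seq (set T)) : uniq s -> s <> [::] ->
  (forall A, A \in s -> exists y, A = [set y]) -> sumsets s <> set0.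
Proof.
case: s => [//|a s] /= /andP [ns us] _ H.
have [y ay] := H a (mem_head _ _); subst a.
move=> h; suff : symdiff [set y] (sumsets s) y by rewrite h.
rewrite symdiffE; split=> // _ /(@sumsets_mem _ s y) [A As Ay].
have [z Az] : exists z, A = [set z] by apply: H; rewrite in_cons As orbT.
subst A; move: Ay => /= zy; subst z.
by move: ns; rewrite As.
Qed.

Definition pr (i k : nat) : set nat := [set m | m = i \/ m = (i + k).+1].

Lemma pr_not1 i k j : pr i k <> [set j].
Proof.
move=> h; have h1 : [set j] i by rewrite -h; left.
have h2 : [set j] (i + k).+1 by rewrite -h; right.
by move: h1 h2 => /= h1 h2; lia.
Qed.

Lemma pr_inj i i' k : pr i k = pr i' k -> i = i'.
Proof.
move=> h; have h1 : pr i' k i by rewrite -h; left.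
have h2 : pr i k i' by rewrite h; left.
case: h1 => // e1; case: h2 => // e2; exfalso; move: e1 e2; lia.
Qed.

Definition fresh (d : nat -> twoc) (k : nat) : twoc :=
  [set S | S = [set k] \/ exists i, S = pr i k /\ ~ d i (pr i k)].

Lemma fresh_new d k i : fresh d k <> d i.
Proof.
move=> h.
case: (EM (d i (pr i k))) => H.
  have : fresh d k (pr i k) by rewrite h.
  case=> [/pr_not1 //|[i' [/pr_inj e]]]; by subst i'.
by apply: (H); rewrite -h; right; exists i; split.
Qed.

Lemma fresh_inj d : injective (fresh d).
Proof.
move=> k k' h; have : fresh d k' [set k] by rewrite -h; left.
case=> [e|[i [e _]]]; [exact: sset1_inj e|exfalso; exact: (pr_not1 (esym e))].
Qed.

Lemma sum_map_symdiff T U (F1 F2 : U -> set T) (s : seq U) :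
  sumsets (map (fun v => symdiff (F1 v) (F2 v)) s) =
  symdiff (sumsets (map F1 s)) (sumsets (map F2 s)).
Proof.
elim: s => [|a s IH] /=; first by rewrite symdiff0.
rewrite -!/(sumsets _) IH !symdiffA; congr symdiff.
by rewrite -!symdiffA (symdiffC (F2 a)).
Qed.

Lemma sum_filter T (P : pred (set T)) (s : seq (set T)) :
  sumsets s = symdiff (sumsets (filter P s)) (sumsets (filter (predC P) s)).
Proof.
elim: s => [|a s IH] /=; first by rewrite symdiff0.
case: (P a) => /=; rewrite -!/(sumsets _) IH.
  by rewrite symdiffA.
by rewrite symdiffAC.
Qed.

Lemma sum_set1 (T : eqType) (s : seq T) : uniq s -> sumsets (map set1 s) = [set` s].
Proof.
elim: s => [|a s IH].
  by move=> _; rewrite sumsets_nil; apply/seteqP; split=> x.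
rewrite map_cons sumsets_cons /= => /andP [ns us]; rewrite IH //.
apply/seteqP; split=> x; rewrite symdiffE /= in_cons.
  move: (EM (x = a)) => [->|ne]; first by rewrite eqxx.
  by move=> [_ h]; apply/orP; right; move: (EM (x \in s)); tauto.
case/orP => [/eqP ->|xs]; split=> //.
  by move=> _ as'; move: ns; rewrite as'.
by move=> xa; move: ns; rewrite -xa xs.
Qed.

Lemma sumsets_sub T (s : seq (set T)) (D : set T) :
  (forall A, A \in s -> A `<=` D) -> sumsets s `<=` D.
Proof. by move=> H x /(@sumsets_mem _ s x) [A /H]; apply. Qed.

Section Basic.
Variable D : set twoc.
Hypothesis hD : countably_infinite D.

Lemma rk_ex : exists rk : twoc -> nat, {in D &, injective rk}.
Proof. exact/countable_injP/(proj1 hD). Qed.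
Definition rk := sval (cid rk_ex).
Lemma rk_inj a b : D a -> D b -> rk a = rk b -> a = b.
Proof. move=> Da Db; apply: (svalP (cid rk_ex)); exact: mem_set. Qed.

Lemma a0_ex : exists a, D a.
Proof. by have [a Da] := infinite_setN0 (proj2 hD); exists a. Qed.
Definition a0 := sval (cid a0_ex).
Lemma Da0 : D a0. Proof. exact: svalP (cid a0_ex). Qed.

Definition xe (k : nat) : twoc :=
  match pselect (exists a, D a /\ rk a = k) with
  | left h => sval (cid h) | right _ => a0 end.
Lemma xe_D k : D (xe k).
Proof. rewrite /xe; case: pselect => [h|_]; [exact: (proj1 (svalP (cid h)))|exact: Da0]. Qed.
Lemma xe_rk a : D a -> xe (rk a) = a.
Proof.
move=> Da; rewrite /xe; case: pselect => [h|[]]; last by exists a.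
by have [D1 e] := svalP (cid h); apply: rk_inj.
Qed.
Lemma rk_xe a k : D a -> rk a = k -> rk (xe k) = k.
Proof. by move=> Da <-; rewrite xe_rk. Qed.

Definition c (a : twoc) : twoc := fresh xe (rk a).
Lemma c_notD a : ~ D (c a).
Proof. by move=> /xe_rk e; apply: (@fresh_new xe (rk a) (rk (c a))); rewrite e. Qed.
Lemma c_inj a b : D a -> D b -> c a = c b -> a = b.
Proof. by move=> Da Db /fresh_inj; apply: rk_inj. Qed.

Definition xx (n : nat) : twoc := [set [set n]].
Definition hseq (n : nat) : set twoc := [set xx n].

Lemma xx_inj : injective xx.
Proof. by move=> n m h; apply: sset1_inj; apply: sset1_inj. Qed.

Lemma good_h : good_seq hseq.
Proof.
split; first by move=> n; exact: finite_set1.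
  by move=> n m h; apply: xx_inj; apply: sset1_inj.
move=> s /NoDup_uniq us ne Hs; apply: sum_singles => // A /In_mem /Hs [n _ <-].
by exists (xx n).
Qed.

Variable I : set twoc.
Variable f : twoc -> nat -> set twoc.
Hypothesis hf : forall a, I a -> good_seq (f a).
Hypothesis hDcl : forall a, D a -> I a -> forall n, f a n `<=` D.

Definition g a n := symdiff (f a n) [set c a].

Lemma g_inj a : D a -> I a -> injective (g a).
Proof.
move=> Da Ia n m e; have [_ fi _] := hf Ia; apply: fi.
by rewrite -(symdiffK [set c a] (f a n)) -(symdiffK [set c a] (f a m)) !(symdiffC [set c a]) -/(g a n) e.
Qed.

Lemma c_in_g a n : D a -> I a -> g a n (c a).
Proof.
move=> Da Ia; rewrite /g symdiffE /=; split=> // h; exfalso.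
exact: (c_notD (hDcl Da Ia h)).
Qed.

Lemma c_notin_g a b m : D a -> D b -> I b -> a <> b -> ~ g b m (c a).
Proof.
move=> Da Db Ib ne; rewrite /g symdiffE /= => -[_ h].
have nc : ~ (c a = c b) by move=> /(c_inj Da Db).
exact: (c_notD (hDcl Db Ib (h nc))).
Qed.

Lemma good_g a : D a -> I a -> good_seq (g a).
Proof.
move=> Da Ia; have [ffin finj find] := hf Ia; split.
- move=> n; rewrite /g /symdiff finite_setU; split.
    by apply: (sub_finite_set (B := f a n)) => // x [].
  apply: (sub_finite_set (B := [set c a])); first by move=> x []. exact: finite_set1.
- exact: g_inj.
move=> s /NoDup_uniq us ne Hs hs.
pose t := map (fun v => symdiff v [set c a]) s.
have tu : uniq t.
  rewrite map_inj_uniq // => u v e.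
  by rewrite -(symdiffK [set c a] u) -(symdiffK [set c a] v) !(symdiffC [set c a]) e.
have tsum : sumsets t = sumsets (map (fun _ => [set c a]) s).
  by rewrite /t (sum_map_symdiff id) map_id hs symdiff0l.
have tin : forall A, A \in t -> exists n, A = f a n.
  move=> A /mapP [v /In_mem /Hs [n _ <-] ->]; exists n.
  by rewrite /g -symdiffA symdiffxx symdiff0.
have t0 : sumsets t = set0.
  apply/seteqP; split=> x // hx.
  have xD : D x.
    apply: (sumsets_sub (s := t) (D := D)) hx => A /tin [n ->]; exact: hDcl.
  have : x = c a.
    move: hx; rewrite tsum => /(@sumsets_mem _ _ x) [A /mapP [v _ ->]] //.
  by move=> e; apply: (c_notD (a := a)); rewrite -e.
apply: (find t) => //.
- exact/NoDup_uniq.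
- by move: ne; rewrite /t; case: (s).
- by move=> A /In_mem /tin [n ->]; exists n.
Qed.

Definition f' a := match pselect (I a) with left _ => g a | right _ => hseq end.

Lemma good_f' a : D a -> good_seq (f' a).
Proof. by move=> Da; rewrite /f'; case: pselect => [Ia|_]; [exact: good_g|exact: good_h]. Qed.

End Basic.

Section Main.
Variable p : twoc -> set (set nat).
Hypothesis hp : forall a, free_ultrafilter (p a).
Variable I : set twoc.
Variable f : twoc -> nat -> set twoc.
Hypothesis hf : forall a, I a -> good_seq (f a).
Variable D : set twoc.
Hypothesis hD : countably_infinite D.
Hypothesis hDcl : forall a, D a -> I a -> forall n, f a n `<=` D.
Variable D0 : set twoc.
Hypothesis hD0 : D0 `<=` D.
Hypothesis hD0fin : finite_set D0.
Variable F : twoc -> bool.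
Variable U : twoc -> set nat.
Hypothesis pU : forall a, D a -> p a (U a).
Hypothesis GU : lin_indep [set A | exists a n, [/\ D a, U a n & A = f' hD I f a n]].

Local Notation rkD := (rk hD).
Local Notation xeD := (xe hD).
Local Notation cD := (c hD).
Local Notation gD := (g hD f).

Definition J a := D a /\ I a.

Lemma f'_g a : I a -> f' hD I f a = gD a.
Proof. by rewrite /f'; case: pselect. Qed.

Definition Yset al := [set A | exists b m, [/\ J b, (rkD b < rkD al)%N, U b m & A = gD b m]].

Lemma indep_a al : J al -> indep_mod (Yset al) (gD al) (U al).
Proof.
move=> [Da Ia] [//|n0 S'] uS _ NS [l [Hl E]].
set S := n0 :: S' in uS NS E *.
pose m := map (gD al) S ++ l.
have Gm : forall A, A \in m -> [set A | exists a n, [/\ D a, U a n & A = f' hD I f a n]] A.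
  move=> A; rewrite mem_cat => /orP [/mapP [n nS ->]|/In_mem /Hl [b [m' [[Db Ib] _ Um ->]]]].
    by exists al, n; rewrite f'_g //; split => //; apply: NS.
  by exists b, m'; rewrite f'_g.
have sm : sumsets m = set0 by rewrite sumsets_cat E symdiffxx.
have r0 : red m = [::].
  case E': (red m) => [//|v r]; exfalso.
  apply: (GU (s := red m)).
  - exact/NoDup_uniq/red_uniq.
  - by rewrite E'.
  - by move=> A /In_mem /red_sub /Gm.
  - by rewrite sumsets_red.
have : gD al n0 \in red m; last by rewrite r0.
rewrite mem_red count_cat.
have -> : count_mem (gD al n0) l = 0.
  apply/count_memPn/negP => /In_mem /Hl [b [m' [[Db Ib] lt Um e]]].
  have ne : al <> b by move=> eab; move: lt; rewrite eab ltnn.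
  apply: (c_notin_g hDcl Da Db Ib ne (m := m')); rewrite -e.
  exact: (c_in_g hD hDcl n0 Da Ia).
rewrite count_map addn0.
have -> : count (preim (gD al) (pred1 (gD al n0))) S = count_mem n0 S.
  apply: eq_count => n /=; apply/eqP/eqP => [/(g_inj hf Da Ia)|->] //.
by rewrite count_uniq_mem // mem_head.
Qed.

Lemma D0l_ex : exists s : seq twoc, D0 = [set` s].
Proof. exact/finite_seqP. Qed.
Definition D0l := sval (cid D0l_ex).
Lemma D0l_spec d : D0 d -> d \in D0l.
Proof. by rewrite {1}(svalP (cid D0l_ex)). Qed.

Definition Xl al : seq (set twoc) :=
  [seq [set xeD k] | k <- iota 0 (rkD al).+1] ++
  [seq [set cD (xeD k)] | k <- iota 0 (rkD al).+1] ++ [seq [set d] | d <- D0l].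

Lemma Xl_xe al k : (k <= rkD al)%N -> List.In [set xeD k] (Xl al).
Proof.
move=> h; apply/In_mem; rewrite mem_cat; apply/orP; left.
by apply: (map_f (fun k => [set xeD k])); rewrite mem_iota.
Qed.
Lemma Xl_c al k : (k <= rkD al)%N -> List.In [set cD (xeD k)] (Xl al).
Proof.
move=> h; apply/In_mem; rewrite !mem_cat; apply/orP; right; apply/orP; left.
by apply: (map_f (fun k => [set cD (xeD k)])); rewrite mem_iota.
Qed.
Lemma Xl_d al d : D0 d -> List.In [set d] (Xl al).
Proof.
move=> h; apply/In_mem; rewrite !mem_cat; apply/orP; right; apply/orP; right.
by apply: (map_f (fun d => [set d])); exact: D0l_spec.
Qed.
Lemma Xl_al al : D al -> List.In [set al] (Xl al).
Proof. by move=> Da; have := Xl_xe (leqnn (rkD al)); rewrite xe_rk. Qed.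
Lemma Xl_cal al : D al -> List.In [set cD al] (Xl al).
Proof. by move=> Da; have := Xl_c (leqnn (rkD al)); rewrite xe_rk. Qed.

Definition K al : seq nat :=
  match pselect (J al) with
  | left h => sval (cid (shrink (Xl al) (indep_a h)))
  | right _ => [::] end.
Definition U' al n := U al n /\ n \notin K al.

Definition Ysp al := Yset al `|` [set A | List.In A (Xl al)].

Lemma indep' al : J al -> indep_mod (Ysp al) (gD al) (U' al).
Proof. by rewrite /U' /K; case: pselect => // h _; exact: (svalP (cid (shrink (Xl al) (indep_a h)))). Qed.

Lemma pU' al : J al -> p al (U' al).
Proof.
move=> [Da Ia]; have [[p0 pT pI pS pu] pfin] := hp al.
have h1 := pU Da.
have h2 : p al (~` [set` K al]).
  case: (pu [set` K al]) => // h; exfalso; apply: (pfin _ _ h); exact: finite_seq.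
apply: pS (pI _ _ h1 h2) => n [Un nK]; split => //; apply/negP => nK'; exact: nK.
Qed.

Definition T1 v := exists al n, [/\ J al, U' al n & v = symdiff (f al n) [set al]].
Definition Bv v := T1 v \/ exists d, D0 d /\ v = [set d].

Lemma XSp al A : List.In A (Xl al) -> Sp (Ysp al) A.
Proof. by move=> h; apply: Sp1; right. Qed.

Lemma g_of_v al n : gD al n = symdiff (symdiff (f al n) [set al]) (symdiff [set al] [set cD al]).
Proof. by rewrite /g -!symdiffA symdiffK. Qed.

Lemma sep_single al n d : J al -> U' al n -> D0 d -> symdiff (f al n) [set al] <> [set d].
Proof.
move=> [Da Ia] Un Dd e.
apply: (indep' (conj Da Ia) (S := [:: n])) => //; first by move=> m; rewrite inE => /eqP ->.
rewrite /= symdiff0 g_of_v e; apply: SpD; first exact/XSp/Xl_d.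
by apply: SpD; apply: XSp; [exact: Xl_al|exact: Xl_cal].
Qed.

Definition wa v : twoc :=
  match pselect (T1 v) with left h => sval (cid h) | right _ => a0 hD end.
Lemma wa_spec v : T1 v ->
  exists n, [/\ J (wa v), U' (wa v) n & v = symdiff (f (wa v) n) [set wa v]].
Proof. by rewrite /wa; case: pselect => // h _; exact: (svalP (cid h)). Qed.
Definition wn v : nat :=
  match pselect (exists n, [/\ J (wa v), U' (wa v) n & v = symdiff (f (wa v) n) [set wa v]]) with
  | left h => sval (cid h) | right _ => 0 end.
Lemma w_spec v : T1 v -> [/\ J (wa v), U' (wa v) (wn v) & v = symdiff (f (wa v) (wn v)) [set wa v]].
Proof.
move=> /wa_spec h; rewrite /wn; case: pselect => // h' ; exact: (svalP (cid h')).
Qed.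

Lemma T2_of v : Bv v -> ~ T1 v -> exists d, D0 d /\ v = [set d].
Proof. by case. Qed.

Lemma Xl_le al b : J al -> D b -> (rkD b <= rkD al)%N ->
  List.In [set b] (Xl al) /\ List.In [set cD b] (Xl al).
Proof. by move=> _ Db h; split; rewrite -(xe_rk hD Db); [exact: Xl_xe|exact: Xl_c]. Qed.

Lemma v_of_g al n : symdiff (f al n) [set al] = symdiff (gD al n) (symdiff [set al] [set cD al]).
Proof. by rewrite g_of_v -symdiffA symdiffxx symdiff0. Qed.

Lemma Qk k : forall s : seq (set twoc), uniq s -> (forall v, v \in s -> Bv v) ->
  (forall v, v \in s -> T1 v -> (rkD (wa v) < k)%N) -> sumsets s = set0 -> s = [::].
Proof.
elim: k => [|k IH] s us Bs Rs s0.
  case E: s => [//|v s']; exfalso; apply: (sum_singles us) => //; first by rewrite E.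
  move=> A As; have [d [_ ->]] := T2_of (Bs A As) (fun t => ltac:(by move: (Rs A As t); rewrite ltn0)).
  by exists d.
pose P := fun v => `[< T1 v /\ rkD (wa v) = k >].
case E1: (filter P s) => [|v0 s1'].
  apply: IH => // v vs T1v; have := Rs v vs T1v; rewrite ltnS leq_eqVlt => /orP [/eqP e|//].
  have : v \in filter P s by rewrite mem_filter vs andbT; apply/asboolP.
  by rewrite E1.
exfalso.
have v0in : v0 \in filter P s by rewrite E1 mem_head.
move: (v0in); rewrite mem_filter => /andP [/asboolP [T1v0 rk0] v0s].
have [Jal _ _] := w_spec T1v0.
set al := wa v0 in Jal rk0.
have Pal : forall v, v \in filter P s -> T1 v /\ wa v = al.
  move=> v; rewrite mem_filter => /andP [/asboolP [T1v rkv] _]; split => //.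
  have [[Dv _] _ _] := w_spec T1v.
  have [Dal _] := Jal.
  by apply: (rk_inj (hD := hD) Dv Dal); rewrite rkv rk0.
set s1 := filter P s in E1 v0in Pal.
have wv : forall v, v \in s1 -> [/\ U' al (wn v) & v = symdiff (f al (wn v)) [set al]].
  by move=> v /Pal [/w_spec [_ h1 h2] <-].
pose S := map wn s1.
apply: (indep' Jal (S := S)).
- rewrite map_inj_in_uniq; first exact: filter_uniq.
  move=> v v' vs v's e; have [_ ev] := wv v vs; have [_ ev'] := wv v' v's.
  by rewrite ev ev' e.
- by rewrite /S E1.
- by move=> n /mapP [v /wv [h _] ->].
have -> : map (gD al) S = map (fun v => symdiff v (symdiff [set al] [set cD al])) s1.
  rewrite /S -map_comp; apply/eq_in_map => v /wv [_ ev] /=.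
  by rewrite g_of_v -ev.
rewrite (sum_map_symdiff id) map_id; apply: SpD; last first.
  apply: Sp_sum => A /In_mem /mapP [v _ ->]; apply: SpD; apply: XSp.
    exact: Xl_al (proj1 Jal).
  exact: Xl_cal (proj1 Jal).
have -> : sumsets s1 = sumsets (filter (predC P) s).
  by apply: symdiff_eq0; rewrite -sum_filter.
apply: Sp_sum => A /In_mem; rewrite mem_filter => /andP [nP As].
case: (EM (T1 A)) => [T1A|nT1]; last first.
  by have [d [Dd ->]] := T2_of (Bs A As) nT1; exact/XSp/Xl_d.
have lt : (rkD (wa A) < k)%N.
  have := Rs A As T1A; rewrite ltnS leq_eqVlt => /orP [/eqP e|//].
  by move: nP => /= /negP []; apply/asboolP.
have [[Db Ib] Ub ->] := w_spec T1A.
have rkal : rkD al = k by [].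
have [X1 X2] := Xl_le Jal Db (ltnW (leq_trans lt (eq_leq (esym rkal)))).
rewrite v_of_g; apply: SpD; last by apply: SpD; exact: XSp.
apply: Sp1; left; exists (wa A), (wn A); split => //; first by rewrite rkal.
by case: Ub.
Qed.

Lemma B_indep : lin_indep Bv.
Proof.
move=> s /NoDup_uniq us ne Hs s0.
have [k Hk] : exists k, forall v, v \in s -> T1 v -> (rkD (wa v) < k)%N.
  elim: (s) => [|a t [k Hk]]; first by exists 0.
  exists (maxn k (rkD (wa a)).+1) => v; rewrite in_cons => /orP [/eqP ->|/Hk h] t1.
    by rewrite leq_max ltnSn orbT.
  by rewrite leq_max (h t1).
by apply: ne; apply: (Qk us _ Hk s0) => v /In_mem /Hs.
Qed.

Definition val (v : set twoc) : bool := `[< exists d, D0 d /\ v = [set d] /\ F d >].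
Definition R0 (z : set twoc * bool) : Prop := Bv z.1 /\ z.2 = val z.1.

Lemma cons0 : consR R0.
Proof.
move=> l Hl s0.
have -> : map snd l = map val (map fst l).
  rewrite -map_comp; apply/eq_in_map => z /In_mem /Hl [_ ->] //.
rewrite -xorl_red.
case E: (red (map fst l)) => [//|v r]; exfalso.
apply: (B_indep (s := red (map fst l))).
- exact/NoDup_uniq/red_uniq.
- by rewrite E.
- move=> A /In_mem /red_sub /mapP [z /In_mem /Hl [hz _] ->] //.
- by rewrite sumsets_red.
Qed.

Definition RI := Rinf cons0 xeD.

Lemma RI_single a : D a -> exists b, RI ([set a], b).
Proof. by move=> Da; have [b hb] := Rinf_single cons0 xeD (rkD a); exists b; rewrite -(xe_rk hD Da). Qed.

Definition phi (A : set twoc) : bool :=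
  `[< exists l, (forall z, List.In z l -> RI z) /\ sumsets (map fst l) = A /\ xorl (map snd l) = true >].

Lemma phi_val l A : (forall z, List.In z l -> RI z) -> sumsets (map fst l) = A ->
  phi A = xorl (map snd l).
Proof. by move=> h1 h2; rewrite /phi (cons_phi (@Rinf_cons _ _ cons0 xeD) h1 h2). Qed.

Lemma span_fin A : finite_set A -> A `<=` D ->
  exists l, (forall z, List.In z l -> RI z) /\ sumsets (map fst l) = A.
Proof.
move=> /finite_seqP [sA ->] AD.
have [bf hbf] : {bf : twoc -> bool & forall a, D a -> RI ([set a], bf a)}.
  apply: (@choice _ _ (fun a b => D a -> RI ([set a], b))) => a; case: (EM (D a)) => [Da|nDa]; last by exists true.
  by have [b hb] := RI_single Da; exists b.
exists (map (fun a => ([set a], bf a)) (undup sA)); split.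
  move=> z /In_mem /mapP [a]; rewrite mem_undup => as' ->; apply: hbf; apply: AD; exact: as'.
rewrite -map_comp /comp /= sum_set1 ?undup_uniq //.
by apply/seteqP; split=> x /=; rewrite mem_undup.
Qed.

Lemma main_sec : exists phi : set twoc -> bool,
    [/\ hom_fin D phi,
        (forall a, D a -> I a -> is_plim (p a) (fun n => phi (f a n)) (phi [set a])) &
        (forall d, D0 d -> phi [set d] = F d)].
Proof.
exists phi; split.
- move=> A B fA fB AD BD.
  have [lA [hA eA]] := span_fin fA AD.
  have [lB [hB eB]] := span_fin fB BD.
  rewrite (phi_val hA eA) (phi_val hB eB) (phi_val (l := lA ++ lB)).
  + by rewrite map_cat xorl_cat.
  + by move=> z /(List.in_app_or _ _ _) [/hA|/hB].
  + by rewrite map_cat sumsets_cat eA eB.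
- move=> a Da Ia; have Ja : J a by [].
  have [[_ _ _ pS _] _] := hp a.
  apply: pS (pU' Ja) => n Un /=.
  have [b hb] := RI_single Da.
  have z1 : RI (symdiff (f a n) [set a], false).
    apply: Rinf_R0; split; first by left; exists a, n.
    apply/esym/negbTE/asboolP => -[d [Dd [e _]]]; exact: (sep_single Ja Un Dd e).
  rewrite (phi_val (l := [:: (symdiff (f a n) [set a], false); ([set a], b)])).
  + rewrite (phi_val (l := [:: ([set a], b)])) //.
    * by move=> z /= [<-|//].
    * by rewrite /= symdiff0.
  + by move=> z /= [<-|[<-|//]].
  + by rewrite /= symdiff0 -symdiffA symdiffxx symdiff0.
- move=> d Dd.
  have hz : RI ([set d], F d).
    apply: Rinf_R0; split; first by right; exists d.
    rewrite /val /=; case E: (F d); first by apply/esym/asboolP; exists d.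
    apply/esym/negbTE/asboolP => -[d' [_ [e Fd']]].
    by move: E; rewrite (sset1_inj e) Fd'.
  rewrite (phi_val (l := [:: ([set d], F d)])) /=; first by rewrite addbF.
    by move=> z /= [<-|//].
  by rewrite symdiff0.
Qed.

End Main.

Theorem mainTheorem6
  (p : twoc -> set (set nat))
  (hp : forall a, free_ultrafilter (p a))
  (hP : propP p)
  (I : set twoc) (f : twoc -> nat -> set twoc)
  (hf : forall a, I a -> good_seq (f a))
  (D : set twoc) (hD : countably_infinite D)
  (hDcl : forall a, D a -> I a -> forall n, f a n `<=` D)
  (D0 : set twoc) (hD0 : D0 `<=` D) (hD0fin : finite_set D0)
  (F : twoc -> bool) :
  exists phi : set twoc -> bool,
    [/\ hom_fin D phi,
        (forall a, D a -> I a -> is_plim (p a) (fun n => phi (f a n)) (phi [set a])) &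
        (forall d, D0 d -> phi [set d] = F d)].
Proof.
have [U [pU _ GU]] := hP D (f' hD I f) hD (fun a Da => good_f' hD hf hDcl Da).
exact: (main_sec hp hf hDcl hD0fin F pU GU).
Qed.
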